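(* Let $G$ be a finite $p$-group for some prime $p$. Then the poset $\overline{C}(G)$ of conjugacy classes of cyclic subgroups of $G$ possesses a breaking point if and only if $G$ is either a cyclic $p$-group of order at least $p^2$, or a generalized quaternion $2$-group $Q_{2^n}$ for some $n\geq 3$.
   Context: For a finite group $G$, let $\overline{C}(G)=\{[H]\mid H \text{ a cyclic subgroup of } G\}$, where $[H]$ is the conjugacy class of $H$, partially ordered by $[H_1]\leq[H_2]$ if and only if $H_1\subseteq H_2^g$ for some $g\in G$. A breaking point of $\overline{C}(G)$ is a class $[H]$ with $H\neq 1$ and $H\neq G$ such that for every $[X]\in\overline{C}(G)$ we have $[X]\leq[H]$ or $[H]\leq[X]$. For $n\geq 3$, the generalized quaternion $2$-group is $Q_{2^n}=\langle a,b \mid a^{2^{n-2}}=b^2,\ a^{2^{n-1}}=1,\ b^{-1}ab=a^{-1}\rangle$, of order $2^n$. *)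

(* Defs.v *)
From HB Require Import structures.
From mathcomp Require Import all_boot all_order all_fingroup all_solvable.
Set Implicit Arguments. Unset Strict Implicit. Unset Printing Implicit Defensive.
Local Open Scope group_scope.

(* [X] <= [H] in the poset of conjugacy classes of cyclic subgroups of G:
   X is contained in some G-conjugate of H. *)
Definition cclass_le (gT : finGroupType) (G X H : {set gT}) : bool :=
  [exists g in G, X \subset H :^ g].

(* [H] is a breaking point of \overline{C}(G); the class is represented by
   a cyclic subgroup H of G (the definition is conjugation invariant). *)
Definition breaking_point (gT : finGroupType) (G H : {group gT}) : bool :=
  [&& H \subset G, cyclic H, H != 1%G, H != G &
      [forall X : {group gT},
         (X \subset G) && cyclic X ==> cclass_le G X H || cclass_le G H X]].

Definition has_breaking_point (gT : finGroupType) (G : {group gT}) : bool :=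
  [exists H : {group gT}, breaking_point G H].

(* Main.v *)
Require Import Defs.
From HB Require Import structures.
From mathcomp Require Import all_boot all_order all_fingroup all_solvable.
Local Open Scope group_scope.

Lemma ohm_in_nontriv (gT : finGroupType) (G X : {group gT}) (p : nat) :
  prime p -> #|'Ohm_1(G)| = p -> X \subset G -> X :!=: 1 ->
  'Ohm_1(G) \subset X.
Proof.
move=> pr oO sXG ntX.
have sO : 'Ohm_1(X) \subset 'Ohm_1(G) := OhmS 1 sXG.
have ntO : 'Ohm_1(X) :!=: 1 by rewrite Ohm1_eq1.
have : 'Ohm_1(X) :==: 'Ohm_1(G).
  rewrite eqEcard sO oO.
  have /primeP[_ h] := pr.
  have := cardSg sO; rewrite oO => /h /orP[/eqP c1|/eqP c1].
    by move: ntO; rewrite trivg_card1 c1.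
  by rewrite c1 leqnn.
by move/eqP <-; apply: Ohm_sub.
Qed.

Lemma log_ge2 (gT : finGroupType) (G H : {group gT}) (p : nat) :
  prime p -> p.-group G -> H \subset G -> H :!=: 1 -> H :!=: G ->
  (p ^ 2 <= #|G|)%N.
Proof.
move=> pr pG sHG ntH neHG.
have pH := pgroupS sHG pG.
have [_ _ [a oH]] := pgroup_pdiv pH ntH.
have [b oG] := p_natP pG.
have lt : (#|H| < #|G|)%N.
  rewrite ltn_neqAle subset_leq_card // andbT.
  apply: contra neHG => /eqP e; rewrite eqEcard sHG -e leqnn.
  by [].
move: lt; rewrite oH oG ltn_exp2l ?(prime_gt1 pr) // => lt.
by rewrite leq_exp2l ?(prime_gt1 pr) //; apply: leq_trans lt.
Qed.

Theorem mainTheorem5 (gT : finGroupType) (G : {group gT}) (p : nat) :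
  prime p -> p.-group G ->
  (has_breaking_point G <->
   (cyclic G /\ (p ^ 2 <= #|G|)%N) \/
   (exists n : nat, (3 <= n)%N /\ G \isog [set: gsort 'Q_(2 ^ n)])).
Proof.
move=> pr pG; split.
- case/existsP=> H /and5P[sHG cycH ntH neHG /forallP bpH].
  have ntG : G :!=: 1.
    by apply: contra ntH => /eqP G1; move: sHG; rewrite G1 => /trivgP h; apply/eqP/val_inj.
  have ntZ : 'Z(G) :!=: 1.
    by apply: contra ntG => /eqP Z1; apply/eqP; apply: trivg_center_pgroup pG Z1.
  have pZ : p.-group 'Z(G) := pgroupS (center_sub G) pG.
  have [_ pdZ _] := pgroup_pdiv pZ ntZ.
  have [z Zz oz] := Cauchy pr pdZ.
  have Gz : z \in G by move: Zz; apply/subsetP; apply: center_sub.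
  have key : forall x, x \in G -> x ^+ p = 1 -> x \in <[z]>.
    have pH : p.-group H := pgroupS sHG pG.
    have ntH' : H :!=: 1.
      by apply: contra ntH => /eqP h; apply/eqP/val_inj.
    have [_ pdH _] := pgroup_pdiv pH ntH'.
    have leH : (p <= #|H|)%N by apply: dvdn_leq.
    have claim : forall y, y \in G -> #[y] = p ->
        exists2 g, g \in G & <[y]> :^ g^-1 \subset H.
      move=> y Gy oy.
      have := bpH <[y]>%G; rewrite cycle_subG Gy cycle_cyclic /=.
      case/orP=> /existsP[g /andP[Gg sg]].
        by exists g => //; rewrite sub_conjgV.
      exists g^-1; first by rewrite groupV.
      rewrite invgK.
      have : H :==: <[y]> :^ g by rewrite eqEcard sg cardJg /=; apply: leq_trans leH; rewrite -oy.
      by move/eqP <-.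
    move=> x Gx xp.
    have [-> | ntx] := eqVneq x 1; first exact: group1.
    have ox : #[x] = p.
      have /primeP[_ h] := pr.
      have := xp; move/eqP; rewrite -order_dvdn => /h /orP[|/eqP //].
      by rewrite order_eq1 (negPf ntx).
    have [gx Ggx sx] := claim x Gx ox.
    have [gz Ggz sz] := claim z Gz oz.
    have nZ : <[z]> <| G.
      by apply: sub_center_normal; rewrite cycle_subG.
    have [_ nZG] := normalP nZ.
    have E : (<[x]> :^ gx^-1)%G :==: (<[z]> :^ gz^-1)%G.
      rewrite (eq_subG_cyclic cycH) // !cardJg; apply/eqP; exact: etrans ox (esym oz).
    have E2 : <[x]> :^ gx^-1 = <[z]>.
      by move/eqP: E => E; rewrite -[LHS]/(gval ((<[x]> :^ gx^-1)%G)) E /= nZG // groupV.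
    have : x \in (<[x]> :^ gx^-1) :^ gx by rewrite conjsgKV cycle_id.
    by rewrite E2 nZG.
  have oO : #|'Ohm_1(G)| = p.
    have -> : 'Ohm_1(G) = <[z]>.
      apply/eqP; rewrite eqEsubset; apply/andP; split.
        rewrite (OhmE 1 pG) gen_subG; apply/subsetP=> x.
        by rewrite !inE expn1 => /andP[Gx /eqP]; apply: key.
      rewrite cycle_subG /= (OhmE 1 pG) mem_gen // !inE Gz expn1 -oz expg_order.
      by rewrite eqxx.
    exact: oz.
  case/orP: (introT (prime_Ohm1P pG ntG) oO) => [cycG | /andP[/eqP p2 /eqP]].
    by left; split=> //; apply: log_ge2 pr pG sHG ntH neHG.
  by case/quaternion_classP=> n n3 iso; right; exists n.
- move=> hyp.
  have [ntG oO bigG] : [/\ G :!=: 1, #|'Ohm_1(G)| = p & (p ^ 2 <= #|G|)%N].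
    case: hyp => [[cycG big] | [n [n3 iso]]].
      have ntG : G :!=: 1.
        apply/negP => /eqP G1; move: big; rewrite G1 cards1.
        by rewrite leqNgt (ltn_exp2l 0 2 (prime_gt1 pr)).
      by split=> //; apply/(prime_Ohm1P pG ntG); rewrite cycG.
    have oG : #|G| = (2 ^ n)%N by rewrite (card_isog iso) card_quaternion.
    have ntG : G :!=: 1.
      apply/negP => /eqP G1; move: oG; rewrite G1 cards1 => /esym /eqP.
      by rewrite -(expn0 2) eqn_exp2l // -(subnKC n3).
    have [_ pd _] := pgroup_pdiv pG ntG.
    have p2 : p = 2.
      move: pd; rewrite oG Euclid_dvdX // => /andP[].
      by rewrite dvdn_prime2 // => /eqP.
    split=> //.
      apply/(prime_Ohm1P pG ntG); apply/orP; right; rewrite p2 eqxx /=.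
      by apply/eqP/quaternion_classP; exists n.
    by rewrite oG p2 leq_exp2l // ltnW.
  have ntO : 'Ohm_1(G) != 1 :> {set gT}.
    by apply/eqP => h; move: oO; rewrite h cards1 => p1; move: pr; rewrite -p1.
  apply/existsP; exists ('Ohm_1(G))%G.
  apply/and5P; split.
  + exact: Ohm_sub.
  + by apply: prime_cyclic; rewrite oO.
  + by apply: contra ntO => /eqP h; rewrite -[X in X == _]/(gval ('Ohm_1(G))%G) h.
  + apply/negP => /eqP E; move: bigG; rewrite -E /= oO.
    by rewrite leqNgt -{1}(expn1 p) ltn_exp2l ?(prime_gt1 pr).
  + apply/forallP => X; apply/implyP => /andP[sXG _].
    have [-> | ntX] := eqVneq X 1%G.
      by apply/orP; left; apply/existsP; exists 1; rewrite group1 conjsg1 sub1G.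
    apply/orP; right; apply/existsP; exists 1; rewrite group1 conjsg1 /=.
    apply: ohm_in_nontriv pr oO sXG _.
    by apply: contra ntX => /eqP h; apply/eqP/val_inj.
Qed.
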